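(* Let $\Bbbk$ be a unital ring, $n,r$ positive integers, $\varepsilon\in\{0,1/2\}$, $d=n-2\varepsilon$, and assume $d>r+1$. Then the kernel of $\Phi_{n,r+\varepsilon}:\Bbbk W_d\to\operatorname{End}_\Bbbk(\mathbf V^{\otimes r})$ contains the cell ideal $$\Bbbk\{y_{\mathfrak s\mathfrak t}\mid \mathfrak s,\mathfrak t\text{ standard},\ [\mathfrak s]=[\mathfrak t]\not\trianglelefteq(r+1,1^{d-r-1})\}$$ of $\Bbbk W_d$.
   Context: $\mathbf V$ is a free $\Bbbk$-module of rank $n$ with basis $\mathbf v_1,\dots,\mathbf v_n$. $W_n$ is the symmetric group on $\{1,\dots,n\}$, acting on $\mathbf V^{\otimes r}$ by $w(\mathbf v_{j_1}\otimes\cdots\otimes\mathbf v_{j_r})=\mathbf v_{w(j_1)}\otimes\cdots\otimes\mathbf v_{w(j_r)}$, giving $\Phi_{n,r}:\Bbbk W_n\to\operatorname{End}_\Bbbk(\mathbf V^{\otimes r})$. $W_{n-1}=\{w\in W_n:w(n)=n\}$ preserves $\mathbf V^{\otimes r}\otimes\mathbf v_n\subset\mathbf V^{\otimes(r+1)}$, identified with $\mathbf V^{\otimes r}$, giving $\Phi_{n,r+1/2}:\Bbbk W_{n-1}\to\operatorname{End}_\Bbbk(\mathbf V^{\otimes r})$. For a partition $\lambda$ of $d$: a $\lambda$-tableau is a bijective filling of the Young diagram by $1,\dots,d$; row-standard means rows increase, standard means rows and columns increase. $\mathfrak t^\lambda$ is the row-reading tableau, $W_\lambda$ its row stabiliser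 in $W_d$, $d(\mathfrak t)\in W_d$ the permutation with $\mathfrak t=d(\mathfrak t)\mathfrak t^\lambda$, $y_\lambda=\sum_{w\in W_\lambda}\operatorname{sgn}(w)w$, $y_{\mathfrak s\mathfrak t}=d(\mathfrak s)^{-1}y_\lambda d(\mathfrak t)$, and $[\mathfrak t]$ is the shape of $\mathfrak t$. $\trianglelefteq$ is the dominance order. The standard $y_{\mathfrak s\mathfrak t}$ form Murphy's cellular basis of $\Bbbk W_d$, and spans over upward-closed sets of shapes are cell ideals. *)

(* Defs.v *)
From mathcomp Require Import all_boot all_order all_algebra all_fingroup.
Set Implicit Arguments. Unset Strict Implicit. Unset Printing Implicit Defensive.
Import GRing.Theory.
Local Open Scope ring_scope.

(* Conventions.  Indices are 0-based: the basis v_1..v_n of V is indexed by  *)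
(* 'I_n, the letters 1..d permuted by W_d by 'I_d, and the r tensor slots by *)
(* 'I_r.  W_d is {perm 'I_d}; w acts on 'I_n (d <= n) by w on the first d     *)
(* indices and trivially on the others (for d = n-1 this is the embedding    *)
(* W_{n-1} = {w in W_n | w(n) = n}).                                          *)

(* Composition of permutations as functions: (compp a b) x = a (b x). *)
Definition compp (d : nat) (a b : {perm 'I_d}) : {perm 'I_d} := (b * a)%g.

(* The group algebra k W_d: elements are coefficient functions. *)
Definition galg (R : pzRingType) (d : nat) := {ffun {perm 'I_d} -> R}.

Definition gdelta (R : pzRingType) (d : nat) (w : {perm 'I_d}) : galg R d :=
  [ffun g => if g == w then 1 else 0].

(* multiplication of k W_d (convolution, w.r.t. function composition) *)
Definition gmul (R : pzRingType) (d : nat) (x y : galg R d) : galg R d :=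
  [ffun g => \sum_(a : {perm 'I_d}) \sum_(b : {perm 'I_d} | compp a b == g)
               x a * y b].

Definition gscale (R : pzRingType) (d : nat) (c : R) (x : galg R d) : galg R d :=
  [ffun g => c * x g].

Definition pext (n d : nat) (w : {perm 'I_d}) (i : 'I_n) : 'I_n :=
  match (insub (nat_of_ord i) : option 'I_d) with
  | Some j => odflt i (insub (nat_of_ord (w j)))
  | None => i
  end.

(* V^{(x) r}: coordinates w.r.t. the basis v_{j_1} (x) ... (x) v_{j_r},      *)
(* indexed by J : 'I_r -> 'I_n.                                              *)
Definition tens (R : pzRingType) (n r : nat) := {ffun {ffun 'I_r -> 'I_n} -> R}.

(* Phi_{n,r}-type action of x in k W_d on V^{(x) r}:                         *)
(*   w (v_{j_1} (x) ... (x) v_{j_r}) = v_{w j_1} (x) ... (x) v_{w j_r}.       *)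
Definition Phi (R : pzRingType) (n r d : nat) (x : galg R d) (f : tens R n r)
  : tens R n r :=
  [ffun K : {ffun 'I_r -> 'I_n} =>
     \sum_(w : {perm 'I_d}) \sum_(J : {ffun 'I_r -> 'I_n} |
                                   [ffun i => @pext n d w (J i)] == K)
        x w * f J].

(* Phi_{n, r + eps} with eps = false meaning 0 and eps = true meaning 1/2:    *)
(* it is defined on k W_{n - 2 eps}.  For eps = 1/2 the space V^{(x) r} (x) v_n *)
(* is identified with V^{(x) r}; W_{n-1} fixes v_n, so it acts on the first r *)
(* factors as above.                                                         *)
Definition Phi_eps (R : pzRingType) (n r : nat) (eps : bool) :
  galg R (n - eps) -> tens R n r -> tens R n r := @Phi R n r (n - eps).

Definition is_partition (d : nat) (la : seq nat) : bool :=
  [&& sorted geq la, all (fun a => 0 < a)%N la & sumn la == d].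

(* box (i,j) (row i, column j, 0-based) of the Young diagram *)
Definition in_diagram (la : seq nat) (b : nat * nat) : bool :=
  (b.1 < size la)%N && (b.2 < nth 0 la b.1)%N.

Definition dom_le (la mu : seq nat) : bool :=
  [forall k : 'I_(size la + size mu).+1,
     (sumn (take k la) <= sumn (take k mu))%N].

Definition hook (d r : nat) : seq nat := r.+1 :: nseq (d - r.+1) 1%N.

(* A tableau with entries 1..d (encoded as 'I_d) is given by the position    *)
(* (row, column) of each entry.  It is a la-tableau when this is a bijection *)
(* onto the Young diagram of la (injective into the diagram, which has       *)
(* exactly d boxes when la is a partition of d).                             *)
Definition tableau (d : nat) := {ffun 'I_d -> nat * nat}.

Definition is_tableau (d : nat) (la : seq nat) (t : tableau d) : bool :=
  injectiveb t && [forall k, in_diagram la (t k)].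

Definition row_standard (d : nat) (t : tableau d) : bool :=
  [forall k, forall l,
     ((t k).1 == (t l).1) && ((t k).2 < (t l).2)%N ==> (k < l)%N].

Definition standard (d : nat) (t : tableau d) : bool :=
  row_standard t &&
  [forall k, forall l,
     ((t k).2 == (t l).2) && ((t k).1 < (t l).1)%N ==> (k < l)%N].

(* position of entry k in the row-reading tableau t^la *)
Fixpoint rr_pos (la : seq nat) (k : nat) : nat * nat :=
  match la with
  | [::] => (0%N, k)
  | a :: la' => if (k < a)%N then (0%N, k)
                else let p := rr_pos la' (k - a) in (p.1.+1, p.2)
  end.

Definition tlam (d : nat) (la : seq nat) : tableau d := [ffun k : 'I_d => rr_pos la k].

(* d(t): the permutation with t = d(t) t^la, i.e. the entry of t in the box   *)
(* containing k in t^la is d(t)(k).                                          *)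
Definition dperm (d : nat) (la : seq nat) (t : tableau d) : {perm 'I_d} :=
  odflt 1%g [pick g : {perm 'I_d} | [forall k, t (g k) == tlam d la k]].

Definition rowstab (d : nat) (la : seq nat) : {set {perm 'I_d}} :=
  [set w : {perm 'I_d} | [forall k, (tlam d la (w k)).1 == (tlam d la k).1]].

Definition sgn (R : pzRingType) (d : nat) (w : {perm 'I_d}) : R :=
  (-1) ^+ odd_perm w.

Definition y_la (R : pzRingType) (d : nat) (la : seq nat) : galg R d :=
  \sum_(w in rowstab d la) gscale (sgn R w) (gdelta R w).

Definition y_st (R : pzRingType) (d : nat) (la : seq nat) (s t : tableau d)
  : galg R d :=
  gmul (gmul (gdelta R (dperm la s)^-1) (y_la R d la)) (gdelta R (dperm la t)).

Definition in_cell_span (R : pzRingType) (d r : nat) (x : galg R d) : Prop :=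
  exists l : seq (R * (seq nat * (tableau d * tableau d))),
    (forall e, e \in l ->
       [/\ is_partition d e.2.1, ~~ dom_le e.2.1 (hook d r),
           is_tableau e.2.1 e.2.2.1 && standard e.2.2.1
         & is_tableau e.2.1 e.2.2.2 && standard e.2.2.2]) /\
    x = \sum_(e <- l) gscale e.1 (y_st R e.2.1 e.2.2.1 e.2.2.2).

(* Main.v *)
Require Import Defs.
From mathcomp Require Import all_boot all_order all_algebra all_fingroup zify.
Set Implicit Arguments. Unset Strict Implicit. Unset Printing Implicit Defensive.
Import GRing.Theory.
Local Open Scope ring_scope.


Lemma pext_lt n d (w : {perm 'I_d}) (i : 'I_n) (j : 'I_d) :
  (d <= n)%N -> val i = val j -> val (pext w i) = val (w j).
Proof.
move=> dn ij; rewrite /pext.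
case: insubP => [k _ kv|]; last by rewrite /= ij ltn_ord.
have -> : k = j by apply: val_inj; rewrite kv ij.
case: insubP => [k' _ -> //|]; by rewrite (leq_trans (ltn_ord _) dn).
Qed.

Arguments pext_lt [n d w i] j.

Lemma pext_ge n d (w : {perm 'I_d}) (i : 'I_n) :
  (d <= val i)%N -> pext w i = i.
Proof. by move=> di; rewrite /pext insubF // ltnNge di. Qed.

Lemma pext_mul n d (s t : {perm 'I_d}) (i : 'I_n) : (d <= n)%N ->
  pext (s * t)%g i = pext t (pext s i).
Proof.
move=> dn; case: (ltnP (val i) d) => id; last by rewrite !pext_ge.
apply: val_inj.
rewrite (pext_lt (Ordinal id)) // permM.
by rewrite (pext_lt (s (Ordinal id))) // (pext_lt (Ordinal id)).
Qed.

Lemma pext1 n d (i : 'I_n) : (d <= n)%N -> pext (1%g : {perm 'I_d}) i = i.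
Proof.
move=> dn; case: (ltnP (val i) d) => id; last by rewrite !pext_ge.
by apply: val_inj; rewrite (pext_lt (Ordinal id)) // perm1.
Qed.

Definition tact r n d (w : {perm 'I_d}) (J : {ffun 'I_r -> 'I_n}) : {ffun 'I_r -> 'I_n} :=
  [ffun i => pext w (J i)].

Lemma tact_mul r n d (s t : {perm 'I_d}) (J : {ffun 'I_r -> 'I_n}) : (d <= n)%N ->
  tact (s * t)%g J = tact t (tact s J).
Proof. by move=> dn; apply/ffunP => i; rewrite !ffunE pext_mul. Qed.

Lemma tact1 r n d (J : {ffun 'I_r -> 'I_n}) : (d <= n)%N ->
  tact (1%g : {perm 'I_d}) J = J.
Proof. by move=> dn; apply/ffunP => i; rewrite !ffunE pext1. Qed.

Lemma PhiE (R : pzRingType) n r d (x : galg R d) (f : tens R n r) K : (d <= n)%N ->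
  Phi x f K = \sum_w x w * f (tact w^-1 K).
Proof.
move=> dn; rewrite ffunE; apply: eq_bigr => w _.
rewrite (big_pred1 (tact w^-1 K)) // => J /=.
apply/eqP/eqP => [<-|->].
  by rewrite -[[ffun i => _]]/(tact w J) -tact_mul // mulgV tact1.
by rewrite -[[ffun i => _]]/(tact w _) -tact_mul // mulVg tact1.
Qed.

Lemma gmulE (R : pzRingType) d (x y : galg R d) g :
  gmul x y g = \sum_a x a * y (g * a^-1)%g.
Proof.
rewrite ffunE; apply: eq_bigr => a _.
rewrite (big_pred1 (g * a^-1)%g) // => b /=.
rewrite /compp; apply/eqP/eqP => [<-|->]; first by rewrite mulgK.
by rewrite mulgKV.
Qed.

Lemma Phi_gmul (R : pzRingType) n r d (x y : galg R d) (f : tens R n r) : (d <= n)%N ->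
  Phi (gmul x y) f = Phi x (Phi y f).
Proof.
move=> dn; apply/ffunP => K; rewrite !PhiE //.
under eq_bigr => g _ do rewrite gmulE mulr_suml.
rewrite exchange_big /=; apply: eq_bigr => a _.
rewrite PhiE // mulr_sumr (reindex_inj (mulIg a)) /=.
apply: eq_bigr => b _; rewrite mulgK mulrA invMg tact_mul //.
Qed.

Lemma Phi0 (R : pzRingType) n r d (x : galg R d) : (d <= n)%N ->
  Phi x (0 : tens R n r) = 0.
Proof.
move=> dn; apply/ffunP => K; rewrite PhiE // ffunE big1 // => w _.
by rewrite ffunE mulr0.
Qed.

Lemma Phi_sum (R : pzRingType) n r d (l : seq (R * galg R d)) (f : tens R n r) : (d <= n)%N ->
  (forall e, e \in l -> Phi e.2 f = 0) ->
  Phi (\sum_(e <- l) gscale e.1 e.2) f = 0.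
Proof.
move=> dn H; apply/ffunP => K; rewrite PhiE // [RHS]ffunE.
under eq_bigr => w _ do rewrite sum_ffunE mulr_suml.
rewrite exchange_big /=; apply: big1_seq => e /andP[_ el].
transitivity (e.1 * Phi e.2 f K).
  rewrite PhiE // mulr_sumr; apply: eq_bigr => w _; by rewrite ffunE mulrA.
by rewrite H // ffunE mulr0.
Qed.

Lemma rr_pos_row la k : (k < sumn la)%N -> ((rr_pos la k).1 < size la)%N.
Proof.
elim: la k => [|a la IH] k //= kl.
case: ifP => // ka /=; rewrite ltnS IH //; lia.
Qed.

Lemma sumn_ge_size s : all (fun a => 0 < a)%N s -> (size s <= sumn s)%N.
Proof. elim: s => //= a s IH /andP[a0 /IH]; lia. Qed.

Lemma not_dom_size d r la : (r.+1 < d)%N -> is_partition d la ->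
  ~~ dom_le la (hook d r) -> (size la + r < d)%N.
Proof.
move=> rd /and3P[_ pos /eqP sd] nd; rewrite ltnNge; apply/negP => le.
case/negP: nd; apply/forallP => -[k _] /=.
have h1 : (sumn (take k la) + sumn (drop k la) = d)%N by rewrite -sumn_cat cat_take_drop.
have h2 : (size (drop k la) <= sumn (drop k la))%N.
  apply: sumn_ge_size; apply/allP => a /mem_drop al; exact: (allP pos).
rewrite size_drop in h2.
case: k h1 h2 => [|k] h1 h2; first by rewrite take0.
rewrite /hook /=.
case: (leqP k (d - r.+1)) => kd.
  rewrite take_nseq // sumn_nseq.
  rewrite mul1n; lia.
rewrite (@take_oversize _ _ (nseq _ _)) ?size_nseq ?sumn_nseq; lia.
Qed.

Lemma free_pair d r n (K : {ffun 'I_r -> 'I_n}) (h : 'I_d -> nat) (m : nat) :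
  (forall a, h a < m)%N -> (m + r < d)%N ->
  exists a b : 'I_d, [/\ a != b, h a = h b, forall i, val (K i) != val a
                                          & forall i, val (K i) != val b].
Proof.
move=> hm mrd.
pose U := [set a : 'I_d | [forall i, val (K i) != val a]].
have cU : (#|~: U| <= r)%N.
  rewrite cardE -(size_map val) -[X in (_ <= X)%N](size_enum_ord r).
  rewrite -(size_map (fun i => val (K i))).
  apply: uniq_leq_size; first by rewrite (map_inj_uniq val_inj) enum_uniq.
  move=> x /mapP[a]; rewrite mem_enum inE in_set => /forallPn[i].
  rewrite negbK => /eqP ia ->; rewrite -ia; apply: map_f; exact: mem_enum.
have := cardsC U; rewrite card_ord => cUU.
case: (boolP [exists a in U, exists b in U, (a != b) && (h a == h b)]).
  case/existsP => a /andP[aU /existsP[b /and3P[bU ab /eqP hab]]].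
  exists a, b; split => //; [move: aU | move: bU]; rewrite inE => /forallP //.
move=> nE; exfalso.
have inj : {in U &, injective h}.
  move=> a b aU bU hab; apply/eqP; apply/negP => nab; case/negP: nE.
  apply/existsP; exists a; rewrite aU; apply/existsP; exists b.
  by rewrite bU hab eqxx andbT; apply/negP.
have : (#|U| <= m)%N.
  rewrite cardE -(size_map h) -[X in (_ <= X)%N](size_iota 0 m).
  apply: uniq_leq_size.
    rewrite (map_inj_in_uniq) ?enum_uniq // => a b; rewrite !mem_enum; exact: inj.
  move=> x /mapP[a _ ->]; rewrite mem_iota; exact: hm.
lia.
Qed.

Lemma y_laE (R : pzRingType) d la w :
  y_la R d la w = if w \in rowstab d la then sgn R w else 0.
Proof.
rewrite /y_la sum_ffunE; case: (boolP (w \in rowstab d la)) => wS.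
  rewrite (bigD1 w) //= !ffunE eqxx mulr1 big1 ?addr0 // => v /andP[_ vw].
  by rewrite !ffunE eq_sym (negbTE vw) mulr0.
apply: big1 => v vS; rewrite !ffunE.
have -> : (w == v) = false by apply/negP => /eqP e; move: wS; rewrite e vS.
by rewrite mulr0.
Qed.

Lemma sign_cancel (R : pzRingType) d (S : {set {perm 'I_d}}) (t : {perm 'I_d})
  (G : {perm 'I_d} -> R) :
  odd_perm t -> (forall w, ((w * t)%g \in S) = (w \in S)) ->
  (forall w, G (w * t)%g = G w) ->
  \sum_(w in S) sgn R w * G w = 0.
Proof.
move=> ot HS HG.
rewrite (bigID (fun w => odd_perm w)) /= (reindex_inj (mulIg t)) /=.
rewrite (eq_bigl (fun w => (w \in S) && ~~ odd_perm w)); last first.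
  by move=> w; rewrite HS odd_permM ot addbT.
rewrite -big_split /=; apply: big1 => w /andP[_ ew].
rewrite HG /sgn odd_permM ot addbT (negbTE ew) /=.
by rewrite expr0 expr1 mul1r mulN1r addNr.
Qed.

Lemma Phi_yla0 (R : pzRingType) n r d la (g : tens R n r) : (d <= n)%N ->
  is_partition d la -> (size la + r < d)%N -> Phi (y_la R d la) g = 0.
Proof.
move=> dn /and3P[_ _ /eqP sd] lrd; apply/ffunP => K; rewrite PhiE // ffunE.
have hm : forall a : 'I_d, ((tlam d la a).1 < size la)%N.
  by move=> a; rewrite ffunE; apply: rr_pos_row; rewrite sd.
have [a [b [ab hab Ka Kb]]] := free_pair K hm lrd.
set t := tperm a b.
have rowt : forall x, (tlam d la (t x)).1 = (tlam d la x).1.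
  by move=> x; rewrite /t; case: tpermP => [->|->|] //.
rewrite (eq_bigr (fun w => if w \in rowstab d la then sgn R w * g (tact (w^-1)%g K) else 0));
  last by move=> w _; rewrite y_laE; case: ifP; rewrite ?mul0r.
rewrite -big_mkcond /=.
apply: (sign_cancel (t := t)); first by rewrite odd_tperm.
  move=> w; rewrite !inE; apply: eq_forallb => k; by rewrite permM rowt.
move=> w; congr (g _); rewrite invMg tact_mul //.
have -> : tact t^-1 K = K; last by [].
apply/ffunP => i; rewrite ffunE tpermV.
case: (ltnP (val (K i)) d) => Kd; last by rewrite pext_ge.
apply: val_inj; rewrite (pext_lt (Ordinal Kd)) // tpermD //.
  by apply/eqP => e; move: (Ka i); rewrite e eqxx.
by apply/eqP => e; move: (Kb i); rewrite e eqxx.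
Qed.

Theorem proposition7p1 (R : pzRingType) (n r : nat) (eps : bool) :
  (0 < n)%N -> (0 < r)%N -> (r.+1 < n - eps)%N ->
  forall x : galg R (n - eps), @in_cell_span R (n - eps) r x ->
  forall f : tens R n r, @Phi_eps R n r eps x f = 0.
Proof.
move=> n0 r0 rd x [l [Hl ->]] f; rewrite /Phi_eps.
have dn : (n - eps <= n)%N by apply: leq_subr.
rewrite -(big_map (fun e => (e.1, y_st R e.2.1 e.2.2.1 e.2.2.2)) xpredT
   (fun p => gscale p.1 p.2)).
apply: Phi_sum => // p /mapP[e el ->] /=.
have [pe nd _ _] := Hl e el.
rewrite /y_st !Phi_gmul // Phi_yla0 ?Phi0 //.
exact: not_dom_size.
Qed.
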